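(* Let $(M,d)$ be a locally compact Hadamard space, $o\in M$, and $f:M\to\mathbb{R}$ a continuous convex function which is unbounded from below and decreases linearly. Let $\tilde f:M\to\mathbb{R}$ be a continuous convex function with $|f-\tilde f|$ bounded. Then $\tilde f$ is unbounded from below and decreases linearly, and $\gamma_{M,o,\tilde f}=\gamma_{M,o,f}$, $a_{M,o,\tilde f}=a_{M,o,f}$.
   Context: For $(M,o,f)$: $x_s$ is the unique minimizer of $f$ on the closed ball $B(o,s)$ and $\gamma_s$ the geodesic from $o$ to $x_s$; $f$ decreases linearly if $\liminf_{s\to\infty}f(x_s)/s<0$. The fastest shrinking geodesic $\gamma_{M,o,f}$ is the pointwise limit of $\gamma_s$ as $s\to\infty$, and the shrinking rate is $a_{M,o,f}=-\lim_{s\to\infty}\frac1s\min_{x\in B(o,s)}f(x)$. *)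

(* Defs.v *)
From HB Require Import structures.
From mathcomp Require Import all_boot all_order all_algebra.
From mathcomp Require Import all_classical all_reals all_analysis.
Set Implicit Arguments.
Unset Strict Implicit.
Unset Printing Implicit Defensive.
Import Order.TTheory GRing.Theory Num.Theory.
Import numFieldNormedType.Exports.
Local Open Scope classical_set_scope.
Local Open Scope ring_scope.

Section Hadamard.
Context {R : realType} {M : metricType R}.

Local Notation d := (@mdist R M).

Definition complete_metric : Prop :=
  forall F : set_system M, ProperFilter F -> cauchy F -> exists x : M, F --> x.

Definition geodesic01 (x y : M) (c : R -> M) : Prop :=
  c 0 = x /\ c 1 = y /\
  forall s t, 0 <= s <= 1 -> 0 <= t <= 1 -> d (c s) (c t) = `|s - t| * d x y.

Definition geodesic_space : Prop := forall x y : M, exists c, geodesic01 x y c.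

(* CAT(0) in the form of the (Bruhat--Tits) CN inequality along geodesics. *)
Definition CN_inequality : Prop :=
  forall (x y z : M) (c : R -> M) (t : R), geodesic01 x y c -> 0 <= t <= 1 ->
    d z (c t) ^+ 2 <= (1 - t) * d z x ^+ 2 + t * d z y ^+ 2
                      - t * (1 - t) * d x y ^+ 2.

Definition hadamard_space : Prop :=
  complete_metric /\ geodesic_space /\ CN_inequality.

Definition convex_fun (f : M -> R) : Prop :=
  forall (x y : M) (c : R -> M) (t : R), geodesic01 x y c -> 0 <= t <= 1 ->
    f (c t) <= (1 - t) * f x + t * f y.

Definition unbounded_below (f : M -> R) : Prop := forall r : R, exists x, f x < r.

Definition cball (o : M) (s : R) : set M := [set y | d o y <= s].

Definition is_ball_minimizer (f : M -> R) (o : M) (s : R) (x : M) : Prop :=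
  cball o s x /\ forall y, cball o s y -> f x <= f y.

(* x_s : the minimizer of f on B(o,s) (unique in the situation of the paper). *)
Definition xs (f : M -> R) (o : M) (s : R) : M := xget o (is_ball_minimizer f o s).

Definition unit_geodesic (o x : M) (c : R -> M) : Prop :=
  (forall t, t <= 0 -> c t = o) /\ (forall t, d o x <= t -> c t = x) /\
  forall s t, 0 <= s <= d o x -> 0 <= t <= d o x -> d (c s) (c t) = `|s - t|.

Definition geod_seg (o x : M) : R -> M :=
  xget (fun=> o) (unit_geodesic o x).

Definition gamma_s (f : M -> R) (o : M) (s : R) : R -> M := geod_seg o (xs f o s).

Definition decreases_linearly (f : M -> R) (o : M) : Prop :=
  (limf_einf (fun s : R => (f (xs f o s) / s)%:E) (pinfty_nbhs R) < 0)%E.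

Definition is_fastest_shrinking_geodesic (f : M -> R) (o : M) (c : R -> M) : Prop :=
  forall t : R, 0 <= t -> gamma_s f o s t @[s --> +oo] --> c t.

Definition is_shrinking_rate (f : M -> R) (o : M) (a : R) : Prop :=
  - (f (xs f o s) / s) @[s --> +oo] --> a.

End Hadamard.

(* Main.v *)
Require Import Defs.
From HB Require Import structures.
From mathcomp Require Import all_boot all_order all_algebra.
From mathcomp Require Import all_classical all_reals all_analysis.
From mathcomp Require Import ring lra.
Import Order.TTheory GRing.Theory Num.Theory.
Import numFieldNormedType.Exports.
Local Open Scope classical_set_scope.
Local Open Scope ring_scope.
Lemma sq_le (R : realType) (a b : R) : 0 <= a -> 0 <= b -> a^+2 <= b^+2 -> a <= b.
Proof. move=> *; nra. Qed.
Lemma sq_lt (R : realType) (a b : R) : 0 <= a -> 0 < b -> a^+2 < b^+2 -> a < b.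
Proof. move=> *; nra. Qed.



Section Geo.
Context {R : realType} {M : metricType R}.
Local Notation d := (@mdist R M).

Lemma mdsym (x y : M) : d x y = d y x. Proof. exact: metric_sym. Qed.
Lemma mdtri (x y z : M) : d x z <= d x y + d y z. Proof. exact: metric_triangle. Qed.
Lemma mdxx (x : M) : d x x = 0. Proof. exact: mdistxx. Qed.
Lemma mdge0 (x y : M) : 0 <= d x y. Proof. exact: mdist_ge0. Qed.

Lemma geo_d0 {x y : M} {c t} : geodesic01 x y c -> 0 <= t <= 1 -> d x (c t) = t * d x y.
Proof.
case=> c0 [c1 H] ht; rewrite -{1}c0 (H 0 t) ?lexx ?ler01 //.
by rewrite sub0r normrN ger0_norm //; case/andP: ht.
Qed.

Lemma geo_d1 {x y : M} {c t} : geodesic01 x y c -> 0 <= t <= 1 -> d (c t) y = (1 - t) * d x y.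
Proof.
case=> c0 [c1 H] ht; rewrite -{1}c1 (H t 1) ?lexx ?ler01 //.
by rewrite distrC ger0_norm // subr_ge0; case/andP: ht.
Qed.

Hypothesis hCN : CN_inequality (M := M).

Lemma dist_convex {x y : M} (z : M) {c t} : geodesic01 x y c -> 0 <= t <= 1 ->
  d z (c t) <= (1 - t) * d z x + t * d z y.
Proof.
move=> hc ht; have := @hCN x y z c t hc ht; case/andP: ht => t0 t1 H.
have h1 := mdtri z y x; have h2 := mdtri z x y.
rewrite (mdsym y x) in h1.
have ha := mdge0 z x; have hb := mdge0 z y; have he := mdge0 x y.
apply: sq_le; [exact: mdge0|nra|].
apply: (le_trans H).
have : 0 <= t * (1 - t) * ((d x y - d z x + d z y) * (d x y + d z x - d z y)).
  apply: mulr_ge0; [nra|]; apply: mulr_ge0; lra.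
nra.
Qed.

Lemma dist_le_ball {x y o : M} {c t s} : geodesic01 x y c -> 0 <= t <= 1 ->
  d o x <= s -> d o y <= s -> d o (c t) <= s.
Proof.
move=> hc ht hx hy; apply: (le_trans (dist_convex o hc ht)).
case/andP: ht => t0 t1; nra.
Qed.

Lemma mid_ineq {x y : M} (o : M) {c} : geodesic01 x y c ->
  d o (c (1/2)) ^+ 2 <= (d o x ^+ 2 + d o y ^+ 2) / 2 - d x y ^+ 2 / 4.
Proof.
move=> hc; have ht : 0 <= (1/2 : R) <= 1.
  by apply/andP; split; [rewrite divr_ge0 // | rewrite ler_pdivrMr //=; lra].
have := @hCN x y o c (1/2) hc ht; lra.
Qed.

Lemma scale_geo {o x y : M} {c c' t} : geodesic01 o x c -> geodesic01 o y c' ->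
  0 <= t <= 1 -> d (c t) (c' t) <= t * d x y.
Proof.
move=> hc hc' ht.
have H1 := @hCN o y (c t) c' t hc' ht.
have H2 := @hCN o x y c t hc ht.
have e1 : d (c t) o = t * d o x by rewrite mdsym (@geo_d0 o x c t hc ht).
rewrite e1 (mdsym (c t) y) in H1.
case/andP: ht => t0 t1.
apply: sq_le; [exact: mdge0| apply: mulr_ge0 => //; exact: mdge0|].
have H3 : t * d y (c t) ^+ 2 <= t * ((1 - t) * d y o ^+ 2 + t * d y x ^+ 2 - t * (1 - t) * d o x ^+ 2).
  by apply: ler_wpM2l.
rewrite (mdsym y o) (mdsym y x) in H3.
nra.
Qed.


Lemma frac01 (s D : R) : 0 < D -> 0 <= s <= D -> 0 <= s / D <= 1.
Proof.
move=> D0 /andP[s0 sD]; apply/andP; split; first by rewrite divr_ge0 // ltW.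
by rewrite ler_pdivrMr // mul1r.
Qed.


Lemma unit_geo_ex (hgeo : geodesic_space (M:=M)) (x y : M) : exists c, unit_geodesic x y c.
Proof.
case: (pselect (x = y)) => [<-|/eqP xy].
  exists (fun _ => x); split; [by []|split; [by []|]].
  move=> s t; rewrite (mdxx x) => /andP[s0 s1] /andP[t0 t1].
  have -> : s = 0 by apply/le_anti; rewrite s0 s1.
  have -> : t = 0 by apply/le_anti; rewrite t0 t1.
  by rewrite subrr normr0.
have D0 : 0 < d x y by rewrite mdist_gt0.
have [g hg] := hgeo x y.
have key : forall s, 0 <= s <= d x y ->
    (if s <= 0 then x else if d x y <= s then y else g (s / d x y)) = g (s / d x y).
  move=> s /andP[s0 sD]; case: hg => g0 [g1 _].
  case: ifPn => [s0'|_].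
    have -> : s = 0 by apply/le_anti; rewrite s0 s0'.
    by rewrite mul0r g0.
  case: ifPn => // Ds.
  have -> : s = d x y by apply/le_anti; rewrite sD Ds.
  by rewrite divff ?g1 // gt_eqF.
exists (fun t => if t <= 0 then x else if d x y <= t then y else g (t / d x y)).
split; first by move=> t ->.
split.
  move=> t Dt; have t0 : 0 < t := lt_le_trans D0 Dt.
  by rewrite leNgt t0 /= Dt.
move=> s t hs ht; rewrite (key s hs) (key t ht).
case: hg => _ [_ H]; rewrite H ?frac01 //.
rewrite -mulrBl normrM normfV (gtr0_norm D0) divfK //; by rewrite gt_eqF.
Qed.

Lemma geod_seg_spec (hgeo : geodesic_space (M:=M)) (x y : M) :
  unit_geodesic x y (geod_seg x y).
Proof. exact: (xgetPex _ (unit_geo_ex hgeo x y)). Qed.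

Lemma ug_0 {o x : M} {c} : unit_geodesic o x c -> c 0 = o.
Proof. by case=> H _; apply: H. Qed.

Lemma ug_d0 {o x : M} {c r} : unit_geodesic o x c -> 0 <= r <= d o x -> d o (c r) = r.
Proof.
move=> hc hr; have e0 := ug_0 hc; case: hc => _ [_ H].
rewrite -{1}e0 (H 0 r) ?lexx ?mdge0 //.
by rewrite sub0r normrN ger0_norm //; case/andP: hr.
Qed.

Lemma ug_sub {o x : M} {c r} : unit_geodesic o x c -> 0 <= r <= d o x ->
  geodesic01 o (c r) (fun u => c (u * r)).
Proof.
move=> hc hr; have e0 := ug_0 hc; have dr := ug_d0 hc hr.
case: hc => _ [_ H]; case/andP: hr => r0 rD.
split; first by rewrite mul0r.
split; first by rewrite mul1r.
move=> s t /andP[s0 s1] /andP[t0 t1].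
rewrite dr (H (s * r) (t * r)).
- by rewrite -mulrBl normrM (ger0_norm r0).
- apply/andP; split; [exact: mulr_ge0|nra].
- apply/andP; split; [exact: mulr_ge0|nra].
Qed.

Lemma cont_at {g : M -> R} : continuous g -> forall x e, 0 < e ->
  exists2 del, 0 < del & forall y, d x y < del -> `|g x - g y| < e.
Proof.
move=> gc x e e0; have := gc x.
move/cvgrPdist_lt/(_ e e0)/metricType_numDomainType.nbhs_mdistP.
by case=> del del0 H; exists del => // y hy; exact: H.
Qed.

Lemma ev_cvg {u : R -> M} {x} :
  (forall e, 0 < e -> exists S, forall a, S < a -> d x (u a) < e) ->
  u a @[a --> +oo] --> x.
Proof.
move=> H; apply/metricType_numDomainType.cvgrPdist_lt => e e0.
have [S HS] := H e e0; exists S; split; [exact: num_real|exact: HS].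
Qed.

Lemma cvg_ev {u : R -> M} {x} : u a @[a --> +oo] --> x ->
  forall e, 0 < e -> exists S, forall a, S < a -> d x (u a) < e.
Proof.
move=> hx e e0; have := metricType_numDomainType.cvgr_dist_lt hx e0.
by case=> S [_ HS]; exists S.
Qed.

Lemma complete_R (hcomp : complete_metric (M:=M)) (u : R -> M) :
  (forall e, 0 < e -> exists S, forall a b, S < a -> S < b -> d (u a) (u b) < e) ->
  exists x : M, u a @[a --> +oo] --> x.
Proof.
move=> H.
have PF : ProperFilter (u @ pinfty_nbhs R) by exact: fmap_proper_filter.
apply: (hcomp _ PF).
apply: (cauchy_exP (u @ pinfty_nbhs R)) => e e0; have [S HS] := H e e0; exists (u (S + 1)).
exists S; split; first exact: num_real.
move=> a Sa /=; rewrite ballEmdist /=; apply: HS => //; lra.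
Qed.



Section Fun.
Context (hgeo : geodesic_space (M:=M)) (hcomp : complete_metric (M:=M)).
Context (g : M -> R) (o : M) (gc : continuous g) (gconv : convex_fun g).

Lemma lb_ball s : exists B, forall y, d o y <= s -> B <= g y.
Proof.
have [del del0 Hd] := cont_at gc o 1 ltr01.
have sd : 0 < `|s| + del by rewrite ltr_wpDl.
pose t := del / (2 * (`|s| + del)).
have t0 : 0 < t by rewrite divr_gt0 // mulr_gt0.
have t1 : t <= 1.
  by rewrite ler_pdivrMr ?mulr_gt0 // mul1r; have := normr_ge0 s; lra.
have ts : t * `|s| < del.
  rewrite /t mulrAC ltr_pdivrMr ?mulr_gt0 //; have := normr_ge0 s; nra.
exists (g o - 1 / t) => y hy.
have [c hc] := hgeo o y.
have ht : 0 <= t <= 1 by rewrite t1 ltW.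
have hz : d o (c t) < del.
  rewrite (geo_d0 hc ht); apply: (le_lt_trans _ ts).
  rewrite ler_pM2l //; apply: (le_trans hy); exact: ler_norm.
have := Hd _ hz; rewrite ltr_norml => /andP[h1 h2].
have hcv := gconv o y c t hc ht.
have e : t * (1 / t) = 1 by rewrite mul1r divff // gt_eqF.
rewrite -(ler_pM2l t0) mulrBr e.
nra.
Qed.

Lemma invr_gt0_lem {a : R} : 0 < a -> 0 < a^-1.
Proof. by rewrite invr_gt0. Qed.

Lemma inv_lt {e a : R} : 0 < e -> 0 < a -> 2 / e < a -> a^-1 < e / 2.
Proof.
move=> e0 a0 h; rewrite ltr_pdivrMr // in h.
rewrite ltr_pdivlMr // -(ltr_pM2l a0) mulrA mulfV ?gt_eqF // mul1r; lra.
Qed.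

Lemma ex_min s : 0 <= s -> exists x, is_ball_minimizer g o s x.
Proof.
move=> s0.
pose V := [set g y | y in cball o s].
have oB : cball o s o by rewrite /cball /= mdxx.
have V0 : V !=set0 by exists (g o); exists o.
have Vlb : has_lbound V.
  have [B HB] := lb_ball s; exists B => v [y hy <-]; exact: HB.
pose mu := inf V.
have mu_le : forall y, cball o s y -> mu <= g y.
  by move=> y hy; apply: ge_inf => //; exists y.
pose K e := [set y | cball o s y /\ g y <= mu + e].
have Kne : forall e, 0 < e -> exists y, K e y.
  move=> e e0; have [v [y hy <-] hv] := inf_adherent e0 (conj V0 Vlb).
  by exists y; split => //; apply: ltW.
have KS : forall e e', e <= e' -> forall y, K e y -> K e' y.
  by move=> e e' ee' y [hy1 hy2]; split => //; apply: (le_trans hy2); rewrite lerD2l.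
pose W e := [set d o y ^+ 2 | y in K e].
have Wlb : forall e, has_lbound (W e).
  by move=> e; exists 0 => v [y _ <-]; apply: sqr_ge0.
have W0 : forall e, 0 < e -> W e !=set0.
  by move=> e e0; have [y hy] := Kne e e0; exists (d o y ^+ 2); exists y.
pose rho e := inf (W e).
have rho_le : forall e y, K e y -> rho e <= d o y ^+ 2.
  by move=> e y hy; apply: ge_inf => //; exists y.
have rho_mono : forall e e', 0 < e -> e <= e' -> rho e' <= rho e.
  move=> e e' e0 ee'; apply: lb_le_inf; first exact: W0.
  move=> v [y hy <-]; apply: rho_le; exact: KS ee' y hy.
have rho_bd : forall e, 0 < e -> rho e <= s ^+ 2.
  move=> e e0; have [y hy] := Kne e e0; apply: (le_trans (rho_le _ _ hy)).
  case: hy => hy _; rewrite /cball /= in hy.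
  have := mdge0 o y; nra.
pose Z := [set rho e | e in [set e | 0 < e]].
have Z0 : Z !=set0 by exists (rho 1); exists 1 => //=.
have Zub : has_ubound Z by exists (s ^+ 2) => v [e e0 <-]; apply: rho_bd.
pose rho0 := sup Z.
have rho_le0 : forall e, 0 < e -> rho e <= rho0.
  by move=> e e0; apply: ub_le_sup => //; exists e.
have rho_adh : forall th, 0 < th -> exists2 e1, 0 < e1 &
    forall e, 0 < e -> e <= e1 -> rho0 - th < rho e.
  move=> th th0; have [v [e1 e10 <-] hv] := sup_adherent th0 (conj Z0 Zub).
  exists e1 => // e e0 ee1; apply: (lt_le_trans hv); exact: rho_mono.
have pex : forall e, 0 < e -> exists y, K e y /\ d o y ^+ 2 < rho e + e.
  move=> e e0; have [v [y hy <-] hv] := inf_adherent e0 (conj (W0 e e0) (Wlb e)).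
  by exists y.
pose p e := xget o (fun y => K e y /\ d o y ^+ 2 < rho e + e).
have p_spec : forall e, 0 < e -> K e (p e) /\ d o (p e) ^+ 2 < rho e + e.
  by move=> e e0; apply: (xgetPex o (pex e e0)).
pose u a := p (a^-1).
have [x hx] : exists x : M, u a @[a --> +oo] --> x.
  apply: complete_R => // eta eta0.
  pose th := eta ^+ 2 / 8.
  have th0 : 0 < th by rewrite divr_gt0 // exprn_gt0.
  have [e1 e10 He1] := rho_adh th th0.
  exists (2 / e1 + 2 / th) => a b Sa Sb.
  have a0 : 0 < a by apply: lt_trans Sa; rewrite addr_gt0 // divr_gt0.
  have b0 : 0 < b by apply: lt_trans Sb; rewrite addr_gt0 // divr_gt0.
  have ha1 : a^-1 < e1 / 2 by apply: inv_lt => //; have := divr_gt0 (ltr0Sn _ 1) th0; lra.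
  have ha2 : a^-1 < th / 2 by apply: inv_lt => //; have := divr_gt0 (ltr0Sn _ 1) e10; lra.
  have hb1 : b^-1 < e1 / 2 by apply: inv_lt => //; have := divr_gt0 (ltr0Sn _ 1) th0; lra.
  have hb2 : b^-1 < th / 2 by apply: inv_lt => //; have := divr_gt0 (ltr0Sn _ 1) e10; lra.
  have ea0 : 0 < a^-1 by rewrite invr_gt0.
  have eb0 : 0 < b^-1 by rewrite invr_gt0.
  have [[Ka1 Ka2] da] := p_spec _ ea0.
  have [[Kb1 Kb2] db] := p_spec _ eb0.
  rewrite /u; set pa := p a^-1; set pb := p b^-1.
  have [c hc] := hgeo pa pb.
  have ht : 0 <= (1/2 : R) <= 1.
    by apply/andP; split; [rewrite divr_ge0 // | rewrite ler_pdivrMr //=; lra].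
  have Kw : K (a^-1 + b^-1) (c (1/2)).
    split; first exact: (dist_le_ball hc ht Ka1 Kb1).
    have := gconv pa pb c (1/2) hc ht; lra.
  have h1 := rho_le _ _ Kw.
  have h2 := He1 (a^-1 + b^-1) (addr_gt0 ea0 eb0) ltac:(lra).
  have h3 := mid_ineq o hc.
  have h4 := rho_le0 _ ea0; have h5 := rho_le0 _ eb0.
  apply: sq_lt; [exact: mdge0|exact: eta0|].
  have -> : eta ^+ 2 = 8 * th by rewrite /th; field.
  lra.
have hev := cvg_ev hx.
exists x; split.
  rewrite /cball /=; apply/ler_addgt0Pr => eta eta0.
  have [S HS] := hev eta eta0.
  have a0 : 0 < `|S| + 1 by rewrite ltr_wpDl.
  have := HS (`|S| + 1) ltac:(have := ler_norm S; lra).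
  have [[Kua _] _] := p_spec _ (invr_gt0_lem a0).
  rewrite /cball /= in Kua; rewrite /u.
  have := mdtri o (p (`|S| + 1)^-1) x; rewrite (mdsym (p _) x); lra.
move=> y hy; apply: (le_trans _ (mu_le y hy)); apply/ler_addgt0Pr => eta eta0.
have eta2 : 0 < eta / 2 by rewrite divr_gt0.
have [del del0 Hd] := cont_at gc x (eta / 2) eta2.
have [S HS] := hev del del0.
pose a := `|S| + 2 / eta + 1.
have e2 : 0 < 2 / eta by rewrite divr_gt0.
have a0 : 0 < a by rewrite /a; have := normr_ge0 S; lra.
have ha : a^-1 < eta / 2 by apply: inv_lt => //; rewrite /a; have := normr_ge0 S; lra.
have := Hd _ (HS a ltac:(rewrite /a; have := ler_norm S; lra)).
have [[_ Kua] _] := p_spec _ (invr_gt0_lem a0).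
rewrite /u ltr_norml => /andP[h1 h2]; lra.
Qed.


Lemma div_le {a b r s : R} : 0 < r -> 0 < s -> a * s <= b * r -> a / r <= b / s.
Proof. by move=> r0 s0 h; rewrite ler_pdivrMr // mulrAC ler_pdivlMr. Qed.

Lemma xs_spec {s} : 0 <= s -> is_ball_minimizer g o s (xs g o s).
Proof. move=> s0; exact: (xgetPex o (ex_min s s0)). Qed.

Definition mm s := g (xs g o s).

Lemma xs_ball {s} : 0 <= s -> d o (xs g o s) <= s.
Proof. by move=> s0; case: (xs_spec s0). Qed.

Lemma mm_min {s y} : 0 <= s -> d o y <= s -> mm s <= g y.
Proof. by move=> s0 hy; case: (xs_spec s0) => _ H; apply: H. Qed.

Lemma mm0 : mm 0 = g o.
Proof.
have h := xs_ball (lexx 0).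
have : d o (xs g o 0) = 0 by apply/le_anti; rewrite h mdge0.
by rewrite /mm; move/mdist_positivity => <-.
Qed.

Lemma mm_mono {r s} : 0 <= r -> r <= s -> mm s <= mm r.
Proof.
move=> r0 rs; apply: mm_min; first exact: le_trans rs.
exact: le_trans (xs_ball r0) rs.
Qed.

Lemma mm_conv {rh r S} : 0 <= rh -> rh <= r -> r <= S -> rh < S ->
  mm r * (S - rh) <= (S - r) * mm rh + (r - rh) * mm S.
Proof.
move=> rh0 rhr rS rhS.
have Sp : 0 < S - rh by rewrite subr_gt0.
have [c hc] := hgeo (xs g o rh) (xs g o S).
pose t := (r - rh) / (S - rh).
have ht : 0 <= t <= 1 by apply: frac01 => //; apply/andP; split; lra.
have et : t * (S - rh) = r - rh by rewrite /t divfK // gt_eqF.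
have e2 : (1 - t) * (S - rh) = S - r by rewrite mulrBl mul1r et; ring.
have hd := dist_convex o hc ht.
have h1 := xs_ball rh0.
have h2 := xs_ball (le_trans (le_trans rh0 rhr) rS).
case/andP: ht => t0 t1.
have hdr : d o (c t) <= r.
  apply: (le_trans hd).
  have : (1 - t) * d o (xs g o rh) <= (1 - t) * rh by apply: ler_wpM2l => //; lra.
  have : t * d o (xs g o S) <= t * S by apply: ler_wpM2l.
  have : (1 - t) * rh + t * S = r by nra.
  lra.
have H := le_trans (mm_min (le_trans rh0 rhr) hdr) (gconv _ _ c t hc (introT andP (conj t0 t1))).
have H' := ler_wpM2r (ltW Sp) H.
apply: (le_trans H'); rewrite -e2 -et /mm.
rewrite le_eqVlt; apply/orP; left; apply/eqP; ring.
Qed.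

Definition qq s := (mm s - g o) / s.

Lemma qq_mono {r s} : 0 < r -> r <= s -> qq r <= qq s.
Proof.
move=> r0 rs; have s0 : 0 < s by exact: lt_le_trans rs.
have := mm_conv (lexx 0) (ltW r0) rs s0; rewrite mm0 !subr0 => h.
apply: div_le => //; nra.
Qed.

Lemma qq_le0 {s} : 0 < s -> qq s <= 0.
Proof.
move=> s0; rewrite /qq ler_pdivrMr // mul0r subr_le0.
by apply: mm_min; [exact: ltW|rewrite mdxx ltW].
Qed.

Definition QQ := [set qq s | s in [set s | 0 < s]].
Definition LL := sup QQ.

Lemma QQ_sup : has_sup QQ.
Proof.
split; first by exists (qq 1); exists 1 => //=.
by exists 0 => v [s s0 <-]; apply: qq_le0.
Qed.

Lemma qq_le_L {s} : 0 < s -> qq s <= LL.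
Proof. by move=> s0; apply: ub_le_sup; [case: QQ_sup|exists s]. Qed.

Lemma L_adh {e} : 0 < e -> exists2 s0, 0 < s0 & forall s, s0 <= s -> LL - e < qq s.
Proof.
move=> e0; have [v [s0 s00 <-] hv] := sup_adherent e0 QQ_sup.
exists s0 => // s hs; apply: (lt_le_trans hv); exact: qq_mono.
Qed.

Lemma mm_eq {s} : 0 < s -> mm s = g o + s * qq s.
Proof. by move=> s0; rewrite /qq mulrC divfK ?gt_eqF //; ring. Qed.

Lemma slope {rh r} : 0 <= rh -> rh <= r -> mm r - mm rh <= LL * (r - rh).
Proof.
move=> rh0 rhr.
have [<-|rhr'] := eqVneq rh r; first by rewrite !subrr mulr0.
have rhr2 : rh < r by rewrite lt_neqAle rhr' rhr.
rewrite leNgt; apply/negP => hX.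
pose X := mm r - mm rh - LL * (r - rh).
have X0 : 0 < X by rewrite /X subr_gt0.
pose K := rh * mm r - r * mm rh + (r - rh) * g o.
pose S := `|K| / X + r + 1.
have KX : 0 <= `|K| / X by rewrite divr_ge0 // ltW.
have rS : r <= S by rewrite /S; lra.
have rhS : rh < S by rewrite /S; lra.
have S0 : 0 < S by lra.
have h1 := mm_conv rh0 rhr rS rhS.
have h2 : (r - rh) * mm S <= (r - rh) * (g o + S * LL).
  apply: ler_wpM2l; first lra.
  rewrite (mm_eq S0) lerD2l; apply: ler_wpM2l; [exact: ltW|exact: qq_le_L].
have h3 : `|K| < S * X.
  rewrite -ltr_pdivrMr //; rewrite /S; lra.
have h4 := ler_norm K.
rewrite /X /K in X0 h3 h4.
nra.
Qed.

Lemma Ds_eq {s} : LL < 0 -> 0 <= s -> d o (xs g o s) = s.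
Proof.
move=> L0 s0; have hD := xs_ball s0; have D0 := mdge0 o (xs g o s).
have h1 : mm (d o (xs g o s)) <= mm s by apply: mm_min.
have h2 := slope D0 hD.
apply/le_anti; rewrite hD /=; nra.
Qed.

Definition gam s := gamma_s g o s.

Lemma gam_ug s : unit_geodesic o (xs g o s) (gam s).
Proof. exact: geod_seg_spec. Qed.

Lemma gam_d {s r} : LL < 0 -> 0 <= r -> r <= s -> d o (gam s r) = r.
Proof.
move=> L0 r0 rs; apply: (ug_d0 (gam_ug s)).
by rewrite (Ds_eq L0 (le_trans r0 rs)) r0 rs.
Qed.

Lemma gam_bound {s r} : LL < 0 -> 0 <= r -> r <= s -> 0 < s ->
  g (gam s r) <= g o + r * LL.
Proof.
move=> L0 r0 rs s0.
have Ds := Ds_eq L0 (ltW s0).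
have hs : 0 <= s <= d o (xs g o s) by rewrite Ds lexx ltW.
have hg := ug_sub (gam_ug s) hs.
have ht : 0 <= r / s <= 1 by apply: frac01 => //; rewrite r0 rs.
have := gconv _ _ _ _ hg ht.
rewrite divfK ?gt_eqF //.
have -> : gam s s = xs g o s by case: (gam_ug s) => _ [H _]; apply: H; rewrite Ds.
have e : r / s * mm s = r * qq s + r / s * g o by rewrite /qq; field; rewrite gt_eqF.
rewrite -/(mm s) e.
have : r * qq s <= r * LL by apply: ler_wpM2l => //; exact: qq_le_L.
have : (1 - r / s) * g o + r / s * g o = g o by ring.
lra.
Qed.

Lemma key_est {X Y : M} {Rr E} : LL < 0 -> 0 < Rr -> 0 <= E -> d o X = Rr -> d o Y = Rr ->
  g X + g Y <= 2 * (g o + Rr * LL) + 2 * E ->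
  d X Y ^+ 2 <= 8 * Rr * (Rr * (LL - qq Rr) + E) / (- LL).
Proof.
move=> L0 R0 E0 dX dY hs.
have [c hc] := hgeo X Y.
have ht : 0 <= (1/2 : R) <= 1.
  by apply/andP; split; [rewrite divr_ge0 // | rewrite ler_pdivrMr //=; lra].
have h1 := mid_ineq o hc; rewrite dX dY in h1.
have h2 := gconv _ _ _ _ hc ht.
set w := c (1/2) in h1 h2.
have rh0 := mdge0 o w.
have rhR : d o w <= Rr by apply: sq_le => //; [exact: ltW|]; have := sqr_ge0 (d X Y); lra.
have h3 : mm (d o w) <= g w by apply: mm_min.
have h4 := slope rh0 rhR.
have h5 := mm_eq R0.
have H : (- LL) * (Rr - d o w) <= Rr * (LL - qq Rr) + E by lra.
have H2 : d X Y ^+ 2 <= 8 * Rr * (Rr - d o w) by nra.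
rewrite ler_pdivlMr ?oppr_gt0 //.
have H3 : 0 <= 8 * Rr by rewrite mulr_ge0 // ltW.
nra.
Qed.

Lemma est2 {x y : M} {c c' r Rr E} : LL < 0 -> 0 <= r -> r <= Rr -> 0 < Rr -> 0 <= E ->
  unit_geodesic o x c -> unit_geodesic o y c' -> Rr <= d o x -> Rr <= d o y ->
  g (c Rr) + g (c' Rr) <= 2 * (g o + Rr * LL) + 2 * E ->
  d (c r) (c' r) ^+ 2 <= 8 * r ^+ 2 * ((LL - qq Rr) + E / Rr) / (- LL).
Proof.
move=> L0 r0 rR R0 E0 hc hc' Rx Ry hs.
have hRx : 0 <= Rr <= d o x by rewrite Rx ltW.
have hRy : 0 <= Rr <= d o y by rewrite Ry ltW.
have g1 := ug_sub hc hRx; have g2 := ug_sub hc' hRy.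
have ht : 0 <= r / Rr <= 1 by apply: frac01 => //; rewrite r0 rR.
have h1 := scale_geo g1 g2 ht; rewrite /= divfK ?gt_eqF // in h1.
have h2 := key_est L0 R0 E0 (ug_d0 hc hRx) (ug_d0 hc' hRy) hs.
have k0 : 0 <= r / Rr by case/andP: ht.
have h3 : d (c r) (c' r) ^+ 2 <= (r / Rr) ^+ 2 * d (c Rr) (c' Rr) ^+ 2.
  rewrite -exprMn; apply: lerXn2r; rewrite ?nnegrE ?mdge0 //.
  by apply: mulr_ge0 => //; exact: mdge0.
apply: (le_trans h3).
have h4 := ler_wpM2l (sqr_ge0 (r / Rr)) h2.
apply: (le_trans h4).
rewrite le_eqVlt; apply/orP; left; apply/eqP.
by field; rewrite lt_eqF // gt_eqF.
Qed.


Lemma good_R {r E eta} : LL < 0 -> 0 <= r -> 0 <= E -> 0 < eta ->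
  exists Rr, [/\ 0 < Rr, r <= Rr &
    8 * r ^+ 2 * ((LL - qq Rr) + E / Rr) / (- LL) < eta].
Proof.
move=> L0 r0 E0 eta0.
have nL : 0 < - LL by rewrite oppr_gt0.
have r1 : 0 < r ^+ 2 + 1 by have := sqr_ge0 r; lra.
pose ep := eta * (- LL) / (16 * (r ^+ 2 + 1)).
have ep0 : 0 < ep by rewrite divr_gt0 ?mulr_gt0.
have [s0 s00 Hs0] := L_adh ep0.
have Eep : 0 <= E / ep by rewrite divr_ge0 // ltW.
pose Rr := s0 + r + 1 + E / ep.
have R0 : 0 < Rr by rewrite /Rr; lra.
exists Rr; split => //; first by rewrite /Rr; lra.
have h1 : LL - ep < qq Rr by apply: Hs0; rewrite /Rr; lra.
have h2 : E / Rr < ep.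
  rewrite ltr_pdivrMr //.
  have : ep * (E / ep) = E by rewrite mulrC divfK // gt_eqF.
  rewrite /Rr; nra.
have h2' : 0 <= E / Rr by rewrite divr_ge0 // ltW.
have h3 : qq Rr <= LL := qq_le_L R0.
have h4 : 16 * ep * (r ^+ 2 + 1) = eta * (- LL).
  by rewrite /ep; field; rewrite gt_eqF.
rewrite ltr_pdivrMr //.
have h5 : 8 * r ^+ 2 * ((LL - qq Rr) + E / Rr) <= 8 * r ^+ 2 * (2 * ep).
  apply: ler_wpM2l; [by rewrite mulr_ge0 // sqr_ge0|lra].
have h6 := sqr_ge0 r.
nra.
Qed.

Lemma h_near {e} : 0 < e -> exists S, forall s, S < s -> `|LL - g (xs g o s) / s| < e.
Proof.
move=> e0; have e2 : 0 < e / 2 by rewrite divr_gt0.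
have [s0 s00 Hs0] := L_adh e2.
have t0 : 0 <= 2 * `|g o| / e by rewrite divr_ge0 ?mulr_ge0 // ltW.
exists (s0 + 2 * `|g o| / e) => s Ss.
have s0s : s0 <= s by lra.
have sp : 0 < s by lra.
have h1 := Hs0 s s0s; have h2 := qq_le_L sp.
have e1 : g (xs g o s) / s = qq s + g o / s by rewrite /qq /mm; field; rewrite gt_eqF.
have h3 : `|g o / s| < e / 2.
  rewrite normrM normfV (gtr0_norm sp) ltr_pdivrMr //.
  have : 2 * `|g o| / e < s by lra.
  rewrite ltr_pdivrMr //; lra.
rewrite e1; move: h3; rewrite ltr_norml => /andP [h4 h5].
rewrite ltr_norml; apply/andP; split; lra.
Qed.

End Fun.

Lemma L_le (hgeo : geodesic_space (M:=M)) (hcomp : complete_metric (M:=M))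
  (g1 g2 : M -> R) (o : M) (gc1 : continuous g1) (gconv1 : convex_fun g1)
  (gc2 : continuous g2) (gconv2 : convex_fun g2) (C : R) :
  (forall x, `|g1 x - g2 x| <= C) -> LL g1 o <= LL g2 o.
Proof.
move=> HC; have C0 : 0 <= C by apply: le_trans (HC o); exact: normr_ge0.
apply/ler_addgt0Pr => e e0.
have e2 : 0 < e / 2 by rewrite divr_gt0.
have [s0 s00 Hs0] := L_adh hgeo hcomp g1 o gc1 gconv1 e2.
have t0 : 0 <= 4 * C / e by rewrite divr_ge0 ?mulr_ge0 // ltW.
pose s := s0 + 4 * C / e + 1.
have sp : 0 < s by rewrite /s; lra.
have h1 := Hs0 s ltac:(rewrite /s; lra).
have h2 := qq_le_L hgeo hcomp g2 o gc2 gconv2 sp.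
have hm1 : mm g1 o s <= mm g2 o s + C.
  have := mm_min hgeo hcomp g1 o gc1 gconv1 (ltW sp) (xs_ball hgeo hcomp g2 o gc2 gconv2 (ltW sp)).
  have := HC (xs g2 o s); rewrite ler_norml /mm => /andP[a b]; lra.
have ho := HC o; rewrite ler_norml in ho; case/andP: ho => ho1 ho2.
have h3 : qq g1 o s - 2 * C / s <= qq g2 o s.
  rewrite /qq -mulrBl; apply: ler_wpM2r; first by rewrite invr_ge0 ltW.
  lra.
have h4 : 2 * C / s < e / 2.
  rewrite ltr_pdivrMr //.
  have : 4 * C / e < s by rewrite /s; lra.
  rewrite ltr_pdivrMr //; lra.
lra.
Qed.

End Geo.

Theorem lemma4p7 (R : realType) (M : metricType R) (o : M) (f ft : M -> R) :
  hadamard_space (M := M) ->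
  locally_compact [set: M] ->
  continuous f -> convex_fun f ->
  unbounded_below f -> decreases_linearly f o ->
  continuous ft -> convex_fun ft ->
  (exists C : R, forall x : M, `|f x - ft x| <= C) ->
  [/\ unbounded_below ft, decreases_linearly ft o,
      (exists c : R -> M,
         is_fastest_shrinking_geodesic f o c /\ is_fastest_shrinking_geodesic ft o c)
    & (exists a : R, is_shrinking_rate f o a /\ is_shrinking_rate ft o a)].
Proof.
move=> [hcomp [hgeo hCN]] _ fc fconv fub fdec ftc ftconv [C HC].
have C0 : 0 <= C by apply: le_trans (HC o); exact: normr_ge0.
have HC' : forall x, `|ft x - f x| <= C by move=> x; rewrite distrC.
have eL : LL ft o = LL f o.
  by apply/le_anti; rewrite (L_le hCN hgeo hcomp _ _ o ftc ftconv fc fconv C HC')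
    (L_le hCN hgeo hcomp _ _ o fc fconv ftc ftconv C HC).
have lb : forall e, 0 < e ->
    (((LL f o) - e)%:E <= limf_einf (fun s => (f (xs f o s) / s)%:E) (pinfty_nbhs R))%E.
  move=> e e0; rewrite limf_einfE; apply: le_ereal_sup_tmp.
  have [S HS] := h_near hCN hgeo hcomp f o fc fconv e0.
  exists (ereal_inf ((fun s => (f (xs f o s) / s)%:E) @` [set s | S < s])).
    exists [set s | S < s] => //; exists S; split; [exact: num_real|by []].
  apply: le_ereal_inf_tmp => _ [s Ss <-]; rewrite lee_fin.
  by have := HS s Ss; rewrite ltr_norml => /andP[h1 h2]; lra.
have L0 : (LL f o) < 0.
  move: fdec; rewrite /decreases_linearly.
  case E: (limf_einf (fun s => (f (xs f o s) / s)%:E) (pinfty_nbhs R)) => [x| |];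
    rewrite E in lb.
  - rewrite lte_fin => x0.
    have Lx : (LL f o) <= x.
      by apply/ler_addgt0Pr => e e0; have := lb e e0; rewrite lee_fin; lra.
    lra.
  - by [].
  - by have := lb 1 ltr01.
have Lt0 : LL ft o < 0 by rewrite eL.
have GB := gam_bound hCN hgeo hcomp f o fc fconv.
have GBt := gam_bound hCN hgeo hcomp ft o ftc ftconv.
have E2 := est2 hCN hgeo hcomp f o fc fconv.
have GR := good_R hCN hgeo hcomp f o fc fconv.
have Dsf := Ds_eq hCN hgeo hcomp f o fc fconv.
have Dst := Ds_eq hCN hgeo hcomp ft o ftc ftconv.
have fconvg : forall t, 0 <= t -> exists x : M, gamma_s f o s t @[s --> +oo] --> x.
  move=> t t0; apply: (complete_R hcomp (fun s => gamma_s f o s t)) => eta eta0.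
  have eta2 : 0 < eta ^+ 2 by rewrite exprn_gt0.
  have [Rr [R0 tR Hb]] := GR t 0 (eta ^+ 2) L0 t0 (lexx 0) eta2.
  exists Rr => a b Ra Rb.
  have a0 : 0 < a by lra.
  have b0 : 0 < b by lra.
  have hRa : Rr <= mdist o (xs f o a) by rewrite Dsf ?ltW //.
  have hRb : Rr <= mdist o (xs f o b) by rewrite Dsf ?ltW //.
  have h1 := GB a Rr L0 (ltW R0) (ltW Ra) a0.
  have h2 := GB b Rr L0 (ltW R0) (ltW Rb) b0.
  have := E2 _ _ _ _ t Rr 0 L0 t0 tR R0 (lexx 0) (gam_ug hgeo f o a) (gam_ug hgeo f o b)
    hRa hRb ltac:(rewrite mulr0 addr0; lra).
  move=> h3; apply: sq_lt; [exact: mdge0|exact: eta0|].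
  exact: (le_lt_trans h3 Hb).
pose c t := xget o (fun x : M => gamma_s f o s t @[s --> +oo] --> x).
have fcv : forall t, 0 <= t -> gamma_s f o s t @[s --> +oo] --> c t.
  by move=> t t0; apply: (xgetPex o (fconvg t t0)).
split.
- move=> r; have [x hx] := fub (r - C); exists x.
  by have := HC x; rewrite ler_norml => /andP[h1 h2]; lra.
- rewrite /decreases_linearly limf_einfE.
  have eh : 0 < - LL ft o / 2 by rewrite divr_gt0 // oppr_gt0.
  have [S HS] := h_near hCN hgeo hcomp ft o ftc ftconv eh.
  apply: (@le_lt_trans _ _ (LL ft o / 2)%:E); last by rewrite lte_fin; lra.
  apply: ge_ereal_sup => _ [V [M0 [_ HV]] <-].
  pose s := `|M0| + `|S| + 1.
  apply: ge_ereal_inf; exists (ft (xs ft o s) / s)%:E.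
    by exists s => //; apply: HV; rewrite /s; have := ler_norm M0; have := normr_ge0 S; lra.
  rewrite lee_fin; have := HS s ltac:(rewrite /s; have := ler_norm S; have := normr_ge0 M0; lra).
  by rewrite ltr_norml => /andP[h1 h2]; lra.
- exists c; split => t t0; first exact: fcv.
  apply: ev_cvg => eta eta0.
  have eta2 : 0 < eta / 2 by rewrite divr_gt0.
  have [S1 HS1] := cvg_ev (fcv t t0) _ eta2.
  have eta22 : 0 < (eta / 2) ^+ 2 by rewrite exprn_gt0.
  have [Rr [R0 tR Hb]] := GR t C ((eta / 2) ^+ 2) L0 t0 C0 eta22.
  exists (`|S1| + Rr) => b Sb.
  pose a := `|S1| + Rr + 1.
  have hS1 := ler_norm S1; have hS1' := normr_ge0 S1.
  have a0 : 0 < a by rewrite /a; lra.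
  have b0 : 0 < b by lra.
  have hRa : Rr <= mdist o (xs f o a) by rewrite Dsf ?ltW // /a; lra.
  have hRb : Rr <= mdist o (xs ft o b) by rewrite Dst ?ltW //; lra.
  have h1 := GB a Rr L0 (ltW R0) ltac:(rewrite /a; lra) a0.
  have h2 := GBt b Rr Lt0 (ltW R0) ltac:(lra) b0.
  have h4 := HC (gam ft o b Rr); rewrite ler_norml in h4; case/andP: h4 => h4 h5.
  have h6 := HC o; rewrite ler_norml in h6; case/andP: h6 => h6 h7.
  rewrite eL in h2.
  have h3 := E2 _ _ _ _ t Rr C L0 t0 tR R0 C0 (gam_ug hgeo f o a) (gam_ug hgeo ft o b)
    hRa hRb ltac:(lra).
  have h8 : mdist (gam f o a t) (gam ft o b t) < eta / 2.
    apply: sq_lt; [exact: mdge0|exact: eta2|].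
    exact: (le_lt_trans h3 Hb).
  have h9 := HS1 a ltac:(rewrite /a; lra).
  have := mdtri (c t) (gam f o a t) (gam ft o b t).
  rewrite /gam /gamma_s in h8 h9 *; lra.
- exists (- LL f o); split; apply/cvgrPdist_lt => e e0.
  + have [S HS] := h_near hCN hgeo hcomp f o fc fconv e0.
    exists S; split; [exact: num_real|] => s Ss /=.
    have := HS s Ss; rewrite -normrN; congr (_ < _); congr (`|_|); ring.
  + have [S HS] := h_near hCN hgeo hcomp ft o ftc ftconv e0.
    exists S; split; [exact: num_real|] => s Ss /=.
    have := HS s Ss; rewrite eL -normrN; congr (_ < _); congr (`|_|); ring.
Qed.
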